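(* Let $T$ be a node-weighted MFQST with Steiner point cost $c>0$. Let $P$ be a path $u=x_0,x_1,\dots,x_{p+1}=v$ in $T$ ($p\ge0$) whose interior nodes $x_1,\dots,x_p$ are all Steiner points of degree $2$. Let $f$ be the common flow on the edges of $P$. Then $$p(p+1)\le\frac{f\,|uv|^2}{c}\le(p+2)(p+1).$$
   Context: Let $Z=\{z_1,\dots,z_n\}\subset\mathbb{R}^2$ ($n\ge 1$) be a set of sources and $z_{BS}\in\mathbb{R}^2\setminus Z$ a sink; each source has supply $1$. A flow-dependent quadratic Steiner tree (FQST) consists of a finite set $S\subset\mathbb{R}^2$ of Steiner points and a tree $T$ with vertex set $Z\cup S\cup\{z_{BS}\}$ whose edges are directed towards $z_{BS}$. Every node other than the sink has exactly one out-edge, and the sink has none. Each edge $e$ carries a positive flow $f(e)$ such that: - at each source, the flow on its out-edge minus the total flow on its in-edges equals $1$; - at each Steiner point, the out-flow equals the total in-flow; - the sink receives total flow $n$. The cost is $L(T)=\sum_{e\in E(T)} f(e)|e|^2$. For a fixed $c>0$, a node-weighted MFQST is an FQST minimising $L_c(T)=L(T)+c|S|$ over all FQSTs (any finite $S$, any topology). *)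

(* Defs.v *)
From Stdlib Require Import Reals Lra Lia List Arith.
Import ListNotations.
Open Scope R_scope.

Definition point : Type := (R * R)%type.

Definition dist2 (a b : point) : R :=
  (fst a - fst b) ^ 2 + (snd a - snd b) ^ 2.

Fixpoint rsum (f : nat -> R) (k : nat) : R :=
  match k with
  | O => 0
  | S k' => rsum f k' + f k'
  end.

Fixpoint ncount (P : nat -> bool) (k : nat) : nat :=
  match k with
  | O => O
  | S k' => (ncount P k' + (if P k' then 1 else 0))%nat
  end.

(* Nodes are indexed by nat:  0..n-1 are the sources (n = length Z),
   n..n+nS-1 are the Steiner points (position spt (v-n)), and
   n+nS is the sink.  Every non-sink node v has the unique out-edge
   (v, nxt v) carrying flow fl v. *)
Record FQST (Z : list point) (zBS : point) : Type := {
  nS  : nat;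
  spt : nat -> point;
  nxt : nat -> nat;
  fl  : nat -> R;
  spt_inj : forall i j, (i < nS)%nat -> (j < nS)%nat -> spt i = spt j -> i = j;
  spt_notZ : forall i, (i < nS)%nat -> ~ In (spt i) Z;
  spt_notBS : forall i, (i < nS)%nat -> spt i <> zBS;
  nxt_range : forall v, (v < length Z + nS)%nat -> (nxt v <= length Z + nS)%nat;
  (* tree: every node reaches the sink along out-edges (so no cycles) *)
  reach_sink : forall v, (v < length Z + nS)%nat ->
      exists k, Nat.iter k nxt v = (length Z + nS)%nat;
  fl_pos : forall v, (v < length Z + nS)%nat -> 0 < fl v;
  cons_source : forall v, (v < length Z)%nat ->
      fl v - rsum (fun u => if Nat.eqb (nxt u) v then fl u else 0)
                  (length Z + nS) = 1;
  cons_steiner : forall v, (length Z <= v < length Z + nS)%nat ->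
      fl v = rsum (fun u => if Nat.eqb (nxt u) v then fl u else 0)
                  (length Z + nS);
  cons_sink :
      rsum (fun u => if Nat.eqb (nxt u) (length Z + nS) then fl u else 0)
           (length Z + nS) = INR (length Z)
}.

Arguments nS {Z zBS}.
Arguments spt {Z zBS}.
Arguments nxt {Z zBS}.
Arguments fl {Z zBS}.

Section FQSTdefs.
Context {Z : list point} {zBS : point}.

Definition sink (T : FQST Z zBS) : nat := (length Z + nS T)%nat.

Definition is_node (T : FQST Z zBS) (v : nat) : Prop := (v <= sink T)%nat.

Definition is_steiner (T : FQST Z zBS) (v : nat) : Prop :=
  (length Z <= v < sink T)%nat.

Definition node_pos (T : FQST Z zBS) (v : nat) : point :=
  if Nat.ltb v (length Z) then nth v Z (0, 0)
  else if Nat.ltb v (sink T) then spt T (v - length Z)%nat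
  else zBS.

Definition cost (T : FQST Z zBS) : R :=
  rsum (fun v => fl T v * dist2 (node_pos T v) (node_pos T (nxt T v))) (sink T).

Definition costc (c : R) (T : FQST Z zBS) : R := cost T + c * INR (nS T).

Definition is_MFQST (c : R) (T : FQST Z zBS) : Prop :=
  forall T' : FQST Z zBS, costc c T <= costc c T'.

Definition indeg (T : FQST Z zBS) (v : nat) : nat :=
  ncount (fun u => Nat.eqb (nxt T u) v) (sink T).
Definition degree (T : FQST Z zBS) (v : nat) : nat :=
  (indeg T v + (if Nat.ltb v (sink T) then 1 else 0))%nat.

Definition adjacent (T : FQST Z zBS) (a b : nat) : Prop :=
  ((a < sink T)%nat /\ nxt T a = b) \/ ((b < sink T)%nat /\ nxt T b = a).

Definition edge_flow (T : FQST Z zBS) (a b : nat) : R :=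
  if andb (Nat.ltb a (sink T)) (Nat.eqb (nxt T a) b) then fl T a else fl T b.

Definition is_path (T : FQST Z zBS) (p : nat) (x : nat -> nat) : Prop :=
  (forall i, (i <= p + 1)%nat -> is_node T (x i)) /\
  (forall i j, (i <= p + 1)%nat -> (j <= p + 1)%nat -> x i = x j -> i = j) /\
  (forall i, (i <= p)%nat -> adjacent T (x i) (x (S i))).

End FQSTdefs.

(* Main.v *)
Require Import Defs.
From Stdlib Require Import Reals List Lra Lia Arith.
Open Scope R_scope.

Lemma rsum_ext g h k : (forall i, (i < k)%nat -> g i = h i) -> rsum g k = rsum h k.
Proof.
  induction k; intros H; simpl; auto.
  rewrite IHk by (intros; apply H; lia). rewrite H by lia. reflexivity.
Qed.

Lemma rsum_plus g h k : rsum (fun i => g i + h i) k = rsum g k + rsum h k.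
Proof. induction k; simpl; [lra|rewrite IHk; lra]. Qed.

Lemma rsum_zero k : rsum (fun _ => 0) k = 0.
Proof. induction k; simpl; [lra|rewrite IHk; lra]. Qed.

Lemma rsum_const a k : rsum (fun _ => a) k = INR k * a.
Proof. induction k; simpl rsum; [simpl; lra|rewrite IHk, S_INR; lra]. Qed.

Lemma rsum_scal a g k : rsum (fun i => a * g i) k = a * rsum g k.
Proof. induction k; simpl; [lra|rewrite IHk; lra]. Qed.

Lemma rsum_change g h k a : (a < k)%nat ->
  (forall i, (i < k)%nat -> i <> a -> g i = h i) ->
  rsum g k = rsum h k + g a - h a.
Proof.
  induction k; intros Ha H; [lia|]. simpl.
  destruct (Nat.eq_dec k a).
  - subst. rewrite (rsum_ext g h a) by (intros; apply H; lia). lra.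
  - rewrite IHk by (try lia; intros; apply H; lia). rewrite (H k) by lia. lra.
Qed.

Lemma rsum_skip g k r : (r <= k)%nat ->
  rsum g (S k) = rsum (fun i => g (if Nat.ltb i r then i else S i)) k + g r.
Proof.
  induction k; intros Hr.
  - assert (r = 0%nat) by lia. subst. simpl. lra.
  - destruct (Nat.eq_dec r (S k)).
    + subst. change (rsum g (S (S k))) with (rsum g (S k) + g (S k)).
      rewrite (rsum_ext (fun i => g (if Nat.ltb i (S k) then i else S i)) g (S k)).
      * reflexivity.
      * intros i Hi. destruct (Nat.ltb_spec i (S k)); [reflexivity|lia].
    + change (rsum g (S (S k))) with (rsum g (S k) + g (S k)).
      rewrite IHk by lia. simpl rsum at 2.
      destruct (Nat.ltb_spec k r); [lia|]. lra.
Qed.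

Lemma rsum_shift g k : rsum g (S k) = g 0%nat + rsum (fun i => g (S i)) k.
Proof. induction k; simpl in *; [lra|]. rewrite IHk. lra. Qed.

Lemma rsum_nonneg g k : (forall i, (i<k)%nat -> 0 <= g i) -> 0 <= rsum g k.
Proof. induction k; intros H; simpl; [lra|]. assert (0 <= g k) by (apply H; lia). assert (0 <= rsum g k) by (apply IHk; intros; apply H; lia). lra. Qed.

Lemma cs_step M T SS a : 0 <= M -> 0 <= SS -> T^2 <= M * SS -> (M = 0 -> T = 0) ->
  (T + a)^2 <= (M + 1) * (SS + a^2).
Proof.
  intros HM HS H H0. destruct (Req_dec M 0) as [E|E].
  - rewrite (H0 E), E. nra.
  - assert (M * (SS + M * a ^2 - 2 * T * a) >= 0) by (pose proof (pow2_ge_0 (T - M * a)); nra).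
    assert (SS + M * a ^2 - 2 * T * a >= 0).
    { destruct (Rle_or_lt 0 (SS + M * a ^2 - 2 * T * a)); [lra|]. nra. }
    nra.
Qed.

Lemma cs_ineq g m : (rsum g m)^2 <= INR m * rsum (fun k => g k ^ 2) m.
Proof.
  induction m; simpl rsum; [simpl; lra|].
  rewrite S_INR. apply cs_step; auto.
  - apply pos_INR.
  - apply rsum_nonneg; intros; nra.
  - intros E. destruct m; [reflexivity|]. pose proof (lt_0_INR (S m) ltac:(lia)). lra.
Qed.

Lemma rsum_tele h m : rsum (fun k => h k - h (S k)) m = h 0%nat - h m.
Proof. induction m; simpl; [lra|rewrite IHm; lra]. Qed.

Lemma path_cs (Q : nat -> point) m :
  dist2 (Q 0%nat) (Q m) <= INR m * rsum (fun k => dist2 (Q k) (Q (S k))) m.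
Proof.
  unfold dist2.
  rewrite rsum_plus.
  pose proof (cs_ineq (fun k => fst (Q k) - fst (Q (S k))) m) as H1.
  pose proof (cs_ineq (fun k => snd (Q k) - snd (Q (S k))) m) as H2.
  rewrite (rsum_tele (fun k => fst (Q k))) in H1.
  rewrite (rsum_tele (fun k => snd (Q k))) in H2.
  lra.
Qed.

Definition Lpt (u v : point) (t : R) : point :=
  (fst u + t * (fst v - fst u), snd u + t * (snd v - snd u)).

Lemma dist2_L u v s t : dist2 (Lpt u v s) (Lpt u v t) = (s - t)^2 * dist2 u v.
Proof. unfold dist2, Lpt; simpl. ring. Qed.

Lemma L0 u v : Lpt u v 0 = u.
Proof. destruct u; unfold Lpt; simpl; f_equal; ring. Qed.
Lemma L1 u v : Lpt u v 1 = v.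
Proof. destruct u, v; unfold Lpt; simpl; f_equal; ring. Qed.

Lemma dist2_sym a b : dist2 a b = dist2 b a.
Proof. unfold dist2; ring. Qed.

Lemma dist2_nonneg a b : 0 <= dist2 a b.
Proof. unfold dist2. pose proof (pow2_ge_0 (fst a - fst b)). pose proof (pow2_ge_0 (snd a - snd b)). lra. Qed.

Lemma sq_pos x : x <> 0 -> 0 < x^2.
Proof. intros H. destruct (Rtotal_order x 0) as [h|[h|h]]; [nra|contradiction|nra]. Qed.

Lemma dist2_pos a b : a <> b -> 0 < dist2 a b.
Proof.
  intros H. destruct a as [a1 a2], b as [b1 b2]; unfold dist2; simpl.
  destruct (Req_dec a1 b1); destruct (Req_dec a2 b2).
  - subst; congruence.
  - assert (a2 - b2 <> 0) by lra. pose proof (sq_pos _ H2). pose proof (pow2_ge_0 (a1 - b1)). lra.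
  - assert (a1 - b1 <> 0) by lra. pose proof (sq_pos _ H2). pose proof (pow2_ge_0 (a2 - b2)). lra.
  - assert (a1 - b1 <> 0) by lra. pose proof (sq_pos _ H2). pose proof (pow2_ge_0 (a2 - b2)). lra.
Qed.

Definition tpar (u v z : point) : R :=
  ((fst z - fst u) * (fst v - fst u) + (snd z - snd u) * (snd v - snd u)) / dist2 u v.

Lemma tpar_L u v t : u <> v -> tpar u v (Lpt u v t) = t.
Proof.
  intros H. pose proof (dist2_pos u v H). unfold tpar, Lpt; simpl.
  field_simplify; [|lra]. unfold dist2 in *. field. lra.
Qed.

Lemma L_inj u v s t : u <> v -> Lpt u v s = Lpt u v t -> s = t.
Proof. intros H E. rewrite <- (tpar_L u v s H), <- (tpar_L u v t H), E. reflexivity. Qed.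

Lemma avoid_list (B : list R) (d : R) : 0 < d ->
  exists e, 0 < e < d /\ forall b, In b B -> b <> e.
Proof.
  revert d; induction B as [|b B IH]; intros d Hd.
  - exists (d/2). split; [lra|]. intros b [].
  - destruct (Rlt_or_le 0 b) as [Hb|Hb].
    + destruct (IH (Rmin d b)) as [e [He1 He2]]. { apply Rmin_glb_lt; lra. }
      exists e. split. { pose proof (Rmin_l d b). lra. }
      intros b' [<-|Hin]. { pose proof (Rmin_r d b). lra. } auto.
    + destruct (IH d Hd) as [e [He1 He2]]. exists e. split; auto.
      intros b' [<-|Hin]; [lra|auto].
Qed.

Fixpoint inb (x : nat -> nat) (w m : nat) : bool :=
  match m with O => false | S m' => Nat.eqb (x m') w || inb x w m' end.

Fixpoint findk (x : nat -> nat) (w m : nat) : nat :=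
  match m with O => O | S m' => if Nat.eqb (x m') w then m' else findk x w m' end.

Lemma inb_true x w m : inb x w m = true <-> exists k, (k < m)%nat /\ x k = w.
Proof.
  induction m; simpl.
  - split; [discriminate|intros [k [Hk _]]; lia].
  - rewrite Bool.orb_true_iff, Nat.eqb_eq, IHm. split.
    + intros [H|[k [Hk H]]]; [exists m; split; auto|exists k; split; auto].
    + intros [k [Hk H]]. destruct (Nat.eq_dec k m); [subst; auto|right; exists k; split; auto; lia].
Qed.

Lemma inb_false x w m : inb x w m = false <-> forall k, (k < m)%nat -> x k <> w.
Proof.
  split.
  - intros H k Hk E. assert (inb x w m = true) by (apply inb_true; eauto). congruence.
  - intros H. destruct (inb x w m) eqn:E; auto. apply inb_true in E. destruct E as [k [Hk E]].
    exfalso; eapply H; eauto.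
Qed.

Lemma findk_spec x w m : inb x w m = true -> (findk x w m < m)%nat /\ x (findk x w m) = w.
Proof.
  induction m; simpl; [discriminate|].
  destruct (Nat.eqb_spec (x m) w); simpl.
  - intros _. split; auto.
  - intros H. destruct (IHm H). split; auto.
Qed.

Lemma findk_inj x m k : (k < m)%nat ->
  (forall i j, (i < m)%nat -> (j < m)%nat -> x i = x j -> i = j) ->
  findk x (x k) m = k.
Proof.
  intros Hk Hinj.
  assert (H : inb x (x k) m = true) by (apply inb_true; eauto).
  destruct (findk_spec _ _ _ H). apply Hinj; auto.
Qed.

Lemma rsum_mask (g : nat -> R) (x : nat -> nat) N m :
  (forall k, (k < m)%nat -> (x k < N)%nat) ->
  (forall i j, (i < m)%nat -> (j < m)%nat -> x i = x j -> i = j) ->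
  rsum g N = rsum (fun v => if inb x v m then 0 else g v) N + rsum (fun k => g (x k)) m.
Proof.
  induction m; intros Hr Hi.
  - simpl. rewrite Rplus_0_r. reflexivity.
  - rewrite IHm by (intros; try apply Hr; try apply Hi; lia).
    rewrite (rsum_change (fun v => if inb x v m then 0 else g v)
                         (fun v => if inb x v (S m) then 0 else g v) N (x m)).
    + simpl. rewrite Nat.eqb_refl. simpl.
      assert (inb x (x m) m = false).
      { apply inb_false. intros k Hk E. assert (k = m) by (apply Hi; lia). lia. }
      rewrite H. lra.
    + apply Hr; lia.
    + intros v Hv Hne. simpl. destruct (Nat.eqb_spec (x m) v); [congruence|]. reflexivity.
Qed.

Lemma ncount_ge1 P N a : (a < N)%nat -> P a = true -> (1 <= ncount P N)%nat.
Proof.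
  induction N; intros Ha Hp; [lia|]. simpl.
  destruct (Nat.eq_dec a N); [subst; rewrite Hp; lia|]. specialize (IHN ltac:(lia) Hp). lia.
Qed.

Lemma ncount_ge2 P N a b : (a < N)%nat -> (b < N)%nat -> a <> b -> P a = true -> P b = true ->
  (2 <= ncount P N)%nat.
Proof.
  induction N; intros Ha Hb Hab Pa Pb; [lia|]. simpl.
  destruct (Nat.eq_dec a N).
  - subst. rewrite Pa. pose proof (ncount_ge1 P N b ltac:(lia) Pb). lia.
  - destruct (Nat.eq_dec b N).
    + subst. rewrite Pb. pose proof (ncount_ge1 P N a ltac:(lia) Pa). lia.
    + specialize (IHN ltac:(lia) ltac:(lia) Hab Pa Pb). lia.
Qed.


Definition inflow {Z zBS} (T : FQST Z zBS) (w : nat) : R :=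
  rsum (fun u => if Nat.eqb (nxt T u) w then fl T u else 0) (sink T).

Lemma indeg_unique {Z zBS} (T : FQST Z zBS) v a b :
  indeg T v = 1%nat -> (a < sink T)%nat -> (b < sink T)%nat -> nxt T a = v -> nxt T b = v -> a = b.
Proof.
  intros H Ha Hb Ea Eb. destruct (Nat.eq_dec a b); auto. exfalso.
  unfold indeg in H.
  pose proof (ncount_ge2 (fun u => Nat.eqb (nxt T u) v) (sink T) a b Ha Hb n
    ltac:(apply Nat.eqb_eq; auto) ltac:(apply Nat.eqb_eq; auto)). lia.
Qed.

Lemma no_2cycle {Z zBS} (T : FQST Z zBS) a b :
  (a < sink T)%nat -> (b < sink T)%nat -> nxt T a = b -> nxt T b = a -> False.
Proof.
  intros Ha Hb E1 E2. destruct (reach_sink Z zBS T a Ha) as [k Hk].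
  assert (forall j, Nat.iter j (nxt T) a = a \/ Nat.iter j (nxt T) a = b).
  { induction j; simpl; auto. destruct IHj as [-> | ->]; auto. }
  destruct (H k) as [E|E]; rewrite E in Hk; unfold sink in *; lia.
Qed.

Definition fwd {Z zBS} (T : FQST Z zBS) (p : nat) (x : nat -> nat) (f : R) : Prop :=
  (forall i, (i <= p+1)%nat -> (x i <= sink T)%nat) /\
  (forall i j, (i <= p+1)%nat -> (j <= p+1)%nat -> x i = x j -> i = j) /\
  (forall i, (i <= p)%nat -> (x i < sink T)%nat /\ nxt T (x i) = x (S i)) /\
  (forall i, (1 <= i <= p)%nat -> (length Z <= x i)%nat) /\
  (forall i, (1 <= i <= p)%nat -> forall u, (u < sink T)%nat -> nxt T u = x i -> u = x (i-1)%nat) /\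
  (forall i, (i <= p)%nat -> fl T (x i) = f).

Definition term {Z zBS} (T : FQST Z zBS) (v : nat) : R :=
  fl T v * dist2 (node_pos T v) (node_pos T (nxt T v)).

Definition Rest {Z zBS} (T : FQST Z zBS) (p : nat) (x : nat -> nat) : R :=
  rsum (fun v => if inb x v (S p) then 0 else term T v) (sink T).

Lemma cost_split {Z zBS} (T : FQST Z zBS) p x f : fwd T p x f ->
  cost T = Rest T p x + f * rsum (fun k => dist2 (node_pos T (x k)) (node_pos T (x (S k)))) (S p).
Proof.
  intros (H1 & H2 & H3 & H4 & H5 & H6).
  unfold cost, Rest. fold (term T).
  rewrite (rsum_mask (term T) x (sink T) (S p)).
  - f_equal. rewrite <- rsum_scal. apply rsum_ext. intros k Hk.
    unfold term. rewrite H6 by lia. rewrite (proj2 (H3 k ltac:(lia))). reflexivity.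
  - intros k Hk. apply H3; lia.
  - intros i j Hi Hj E. apply H2; auto; lia.
Qed.

Definition sg (N w : nat) : nat := if Nat.eqb w N then S N else w.

Definition sd_nxt {Z zBS} (T : FQST Z zBS) p (x : nat -> nat) (w : nat) : nat :=
  if Nat.eqb w (x p) then sink T
  else if Nat.eqb w (sink T) then sg (sink T) (x (S p)) else sg (sink T) (nxt T w).

Definition sd_fl {Z zBS} (T : FQST Z zBS) (f : R) (w : nat) : R :=
  if Nat.eqb w (sink T) then f else fl T w.

Definition xs (x : nat -> nat) := fun k => x (S k).

Definition sd_spt {Z zBS} (T : FQST Z zBS) p (x : nat -> nat) (Y : nat -> point) (i : nat) : point :=
  if Nat.eqb i (nS T) then Y (S p)
  else if inb (xs x) (length Z + i) p then Y (S (findk (xs x) (length Z + i) p)) else spt T i.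

Lemma sg_lt N w : (w < N)%nat -> sg N w = w.
Proof. intros. unfold sg. destruct (Nat.eqb_spec w N); lia. Qed.
Lemma sg_N N : sg N N = S N.
Proof. unfold sg. rewrite Nat.eqb_refl. auto. Qed.
Lemma sg_ne N w : (w <= N)%nat -> sg N w <> N.
Proof. intros. unfold sg. destruct (Nat.eqb_spec w N); lia. Qed.
Lemma sg_inj N a b : (a <= N)%nat -> (b <= N)%nat -> sg N a = sg N b -> a = b.
Proof. unfold sg. intros. destruct (Nat.eqb_spec a N), (Nat.eqb_spec b N); lia. Qed.
Lemma sg_le N w : (w <= N)%nat -> (sg N w <= S N)%nat.
Proof. unfold sg. intros. destruct (Nat.eqb_spec w N); lia. Qed.

Lemma eqb_sg N a b : (a <= N)%nat -> (b <= N)%nat -> Nat.eqb (sg N a) (sg N b) = Nat.eqb a b.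
Proof.
  intros. destruct (Nat.eqb_spec a b) as [e|e], (Nat.eqb_spec (sg N a) (sg N b)) as [e'|e']; auto.
  exfalso. apply e. apply sg_inj with N; auto.
Qed.

Lemma xs_inb_lt {Z zBS} (T : FQST Z zBS) p x f w : fwd T p x f ->
  inb (xs x) w p = true -> (length Z <= w < sink T)%nat.
Proof.
  intros (H1 & H2 & H3 & H4 & H5 & H6) H. apply inb_true in H. destruct H as [k [Hk E]].
  unfold xs in E. subst. split; [apply H4; lia|apply H3; lia].
Qed.

Lemma xs_inb_x {Z zBS} (T : FQST Z zBS) p x f k : fwd T p x f -> (k <= p+1)%nat ->
  inb (xs x) (x k) p = true <-> (1 <= k <= p)%nat.
Proof.
  intros (H1 & H2 & H3 & H4 & H5 & H6) Hk. rewrite inb_true. unfold xs. split.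
  - intros [j [Hj E]]. apply H2 in E; lia.
  - intros Hk'. exists (k - 1)%nat. split; [lia|]. f_equal; lia.
Qed.

Lemma xs_findk {Z zBS} (T : FQST Z zBS) p x f k : fwd T p x f -> (1 <= k <= p)%nat ->
  findk (xs x) (x k) p = (k - 1)%nat.
Proof.
  intros Hf Hk. destruct Hf as (H1 & H2 & H3 & H4 & H5 & H6).
  replace (x k) with (xs x (k-1)%nat) by (unfold xs; f_equal; lia).
  apply findk_inj; [lia|]. intros i j Hi Hj E. unfold xs in E. apply H2 in E; lia.
Qed.

Lemma rsum_S g k : rsum g (S k) = rsum g k + g k.
Proof. reflexivity. Qed.

Lemma nxt_le {Z zBS} (T : FQST Z zBS) u : (u < sink T)%nat -> (nxt T u <= sink T)%nat.
Proof. intros; apply nxt_range; auto. Qed.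

Lemma sd_nxt_other {Z zBS} (T : FQST Z zBS) p x u :
  u <> x p -> (u < sink T)%nat -> sd_nxt T p x u = sg (sink T) (nxt T u).
Proof.
  intros H1 H2. unfold sd_nxt. destruct (Nat.eqb_spec u (x p)); [contradiction|].
  destruct (Nat.eqb_spec u (sink T)); [lia|reflexivity].
Qed.

Lemma sd_nxt_xp {Z zBS} (T : FQST Z zBS) p x : sd_nxt T p x (x p) = sink T.
Proof. unfold sd_nxt. rewrite Nat.eqb_refl. reflexivity. Qed.

Lemma sd_nxt_N {Z zBS} (T : FQST Z zBS) p x f : fwd T p x f ->
  sd_nxt T p x (sink T) = sg (sink T) (x (S p)).
Proof.
  intros (H1 & H2 & H3 & H4 & H5 & H6). unfold sd_nxt.
  destruct (Nat.eqb_spec (sink T) (x p)). { pose proof (proj1 (H3 p ltac:(lia))). lia. }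
  rewrite Nat.eqb_refl. reflexivity.
Qed.

Lemma sd_fl_lt {Z zBS} (T : FQST Z zBS) f u : (u < sink T)%nat -> sd_fl T f u = fl T u.
Proof. intros. unfold sd_fl. destruct (Nat.eqb_spec u (sink T)); [lia|auto]. Qed.

Lemma sd_inflow_sg {Z zBS} (T : FQST Z zBS) p x f w : fwd T p x f -> (w <= sink T)%nat ->
  rsum (fun u => if Nat.eqb (sd_nxt T p x u) (sg (sink T) w) then sd_fl T f u else 0) (S (sink T))
  = inflow T w.
Proof.
  intros Hf Hw. pose proof Hf as (H1 & H2 & H3 & H4 & H5 & H6).
  destruct (H3 p ltac:(lia)) as [Hp1 Hp2].
  rewrite rsum_S. rewrite (sd_nxt_N T p x f Hf).
  unfold sd_fl at 2. rewrite Nat.eqb_refl.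
  rewrite eqb_sg by (auto; apply H1; lia).
  unfold inflow.
  rewrite (rsum_change _ (fun u => if Nat.eqb (nxt T u) w then fl T u else 0) (sink T) (x p) Hp1).
  - rewrite sd_nxt_xp. destruct (Nat.eqb_spec (sink T) (sg (sink T) w)).
    { exfalso. apply (sg_ne (sink T) w); auto. }
    rewrite Hp2, H6 by lia. destruct (Nat.eqb_spec (x (S p)) w); lra.
  - intros u Hu Hne. rewrite sd_nxt_other by auto. rewrite sd_fl_lt by auto.
    rewrite eqb_sg by (auto; apply nxt_le; auto). reflexivity.
Qed.

Lemma sd_inflow_N {Z zBS} (T : FQST Z zBS) p x f : fwd T p x f ->
  rsum (fun u => if Nat.eqb (sd_nxt T p x u) (sink T) then sd_fl T f u else 0) (S (sink T)) = f.
Proof.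
  intros Hf. pose proof Hf as (H1 & H2 & H3 & H4 & H5 & H6).
  destruct (H3 p ltac:(lia)) as [Hp1 Hp2].
  rewrite rsum_S. rewrite (sd_nxt_N T p x f Hf).
  destruct (Nat.eqb_spec (sg (sink T) (x (S p))) (sink T)).
  { exfalso. apply (sg_ne (sink T) (x (S p))); auto. apply H1; lia. }
  rewrite (rsum_change _ (fun _ => 0) (sink T) (x p) Hp1).
  - rewrite rsum_zero, sd_nxt_xp, Nat.eqb_refl, sd_fl_lt, H6 by lia. lra.
  - intros u Hu Hne. rewrite sd_nxt_other by auto.
    destruct (Nat.eqb_spec (sg (sink T) (nxt T u)) (sink T)); auto.
    exfalso. apply (sg_ne (sink T) (nxt T u)); auto. apply nxt_le; auto.
Qed.

Lemma sd_reach {Z zBS} (T : FQST Z zBS) p x f : fwd T p x f ->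
  forall k v, (v <= sink T)%nat -> Nat.iter k (nxt T) v = sink T ->
  exists k', Nat.iter k' (sd_nxt T p x) (sg (sink T) v) = S (sink T).
Proof.
  intros Hf. pose proof Hf as (H1 & H2 & H3 & H4 & H5 & H6).
  destruct (H3 p ltac:(lia)) as [Hp1 Hp2].
  induction k; intros v Hv Hk.
  - simpl in Hk. subst. exists 0%nat. simpl. apply sg_N.
  - destruct (Nat.eq_dec v (sink T)). { subst. exists 0%nat. simpl. apply sg_N. }
    rewrite Nat.iter_succ_r in Hk.
    destruct (IHk (nxt T v) ltac:(apply nxt_le; lia) Hk) as [k' Hk'].
    rewrite sg_lt by lia.
    destruct (Nat.eq_dec v (x p)).
    + exists (S (S k')). rewrite !Nat.iter_succ_r. subst v. rewrite sd_nxt_xp.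
      rewrite (sd_nxt_N T p x f Hf). rewrite <- Hp2. auto.
    + exists (S k'). rewrite Nat.iter_succ_r. rewrite sd_nxt_other by lia. auto.
Qed.

Definition Yok {Z zBS} (T : FQST Z zBS) (Y : nat -> point) (a b : nat) : Prop :=
  (forall k, (a <= k <= b)%nat -> ~ In (Y k) Z /\ Y k <> zBS /\ forall i, (i < nS T)%nat -> Y k <> spt T i) /\
  (forall j k, (a <= j <= b)%nat -> (a <= k <= b)%nat -> Y j = Y k -> j = k).

Lemma sd_build {Z zBS} (T : FQST Z zBS) p x f Y : fwd T p x f -> Yok T Y 1 (S p) ->
  exists T' : FQST Z zBS, nS T' = S (nS T) /\ (forall i, spt T' i = sd_spt T p x Y i) /\
    (forall w, nxt T' w = sd_nxt T p x w) /\ (forall w, fl T' w = sd_fl T f w).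
Proof.
  intros Hf [HYa HYi]. pose proof Hf as (H1 & H2 & H3 & H4 & H5 & H6).
  destruct (H3 p ltac:(lia)) as [Hp1 Hp2].
  assert (Hfpos : 0 < f). { rewrite <- (H6 0%nat) by lia. apply fl_pos. apply (H3 0%nat); lia. }
  assert (EN : forall k, (length Z + S k = S (length Z + k))%nat) by (intros; lia).
  unshelve eexists (Build_FQST Z zBS (S (nS T)) (sd_spt T p x Y) (sd_nxt T p x) (sd_fl T f) _ _ _ _ _ _ _ _ _);
    [ | | | | | | | | | split; [reflexivity|split; [|split]]; intros; reflexivity].
  -
    intros i j Hi Hj. unfold sd_spt.
    destruct (Nat.eqb_spec i (nS T)) as [ei|ei]; destruct (Nat.eqb_spec j (nS T)) as [ej|ej];
      [intros; lia| | | ].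
    + destruct (inb (xs x) (length Z + j) p) eqn:Ej.
      * destruct (findk_spec _ _ _ Ej) as [Hk _]. intros E. apply HYi in E; lia.
      * intros E. exfalso. apply (proj2 (proj2 (HYa (S p) ltac:(lia))) j ltac:(lia)). auto.
    + destruct (inb (xs x) (length Z + i) p) eqn:Ei.
      * destruct (findk_spec _ _ _ Ei) as [Hk _]. intros E. apply HYi in E; lia.
      * intros E. exfalso. apply (proj2 (proj2 (HYa (S p) ltac:(lia))) i ltac:(lia)). auto.
    + destruct (inb (xs x) (length Z + i) p) eqn:Ei; destruct (inb (xs x) (length Z + j) p) eqn:Ej.
      * destruct (findk_spec _ _ _ Ei) as [Hk1 E1]. destruct (findk_spec _ _ _ Ej) as [Hk2 E2].
        intros E. apply HYi in E; try lia. assert (findk (xs x) (length Z + i) p = findk (xs x) (length Z + j) p) by lia.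
        rewrite H in E1. rewrite E1 in E2. lia.
      * destruct (findk_spec _ _ _ Ei) as [Hk1 E1]. intros E. exfalso.
        apply (proj2 (proj2 (HYa (S (findk (xs x) (length Z + i) p)) ltac:(lia))) j ltac:(lia)). auto.
      * destruct (findk_spec _ _ _ Ej) as [Hk1 E1]. intros E. exfalso.
        apply (proj2 (proj2 (HYa (S (findk (xs x) (length Z + j) p)) ltac:(lia))) i ltac:(lia)). auto.
      * apply spt_inj; lia.
  -
    intros i Hi. unfold sd_spt. destruct (Nat.eqb_spec i (nS T)); [apply HYa; lia|].
    destruct (inb (xs x) (length Z + i) p) eqn:Ei.
    + destruct (findk_spec _ _ _ Ei). apply (HYa (S (findk (xs x) (length Z + i) p))); lia.
    + apply spt_notZ; lia.
  -
    intros i Hi. unfold sd_spt. destruct (Nat.eqb_spec i (nS T)); [apply HYa; lia|].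
    destruct (inb (xs x) (length Z + i) p) eqn:Ei.
    + destruct (findk_spec _ _ _ Ei). apply (HYa (S (findk (xs x) (length Z + i) p))); lia.
    + apply spt_notBS; lia.
  -
    intros v Hv. rewrite EN in *. fold (sink T) in *.
    destruct (Nat.eq_dec v (x p)). { subst. rewrite sd_nxt_xp. lia. }
    destruct (Nat.eq_dec v (sink T)).
    { subst. rewrite (sd_nxt_N T p x f Hf). apply sg_le. apply H1; lia. }
    rewrite sd_nxt_other by lia. apply sg_le. apply nxt_le. lia.
  -
    intros v Hv. rewrite EN in *. fold (sink T) in *.
    destruct (Nat.eq_dec v (sink T)).
    + subst v.
      assert (exists k, Nat.iter k (nxt T) (x (S p)) = sink T) as [k Hk].
      { destruct (Nat.eq_dec (x (S p)) (sink T)). { exists 0%nat. auto. }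
        apply reach_sink. assert (x (S p) <= sink T)%nat by (apply H1; lia). unfold sink in *. lia. }
      destruct (sd_reach T p x f Hf k (x (S p)) ltac:(apply H1; lia) Hk) as [k' Hk'].
      exists (S k'). rewrite Nat.iter_succ_r, (sd_nxt_N T p x f Hf). auto.
    + destruct (reach_sink Z zBS T v ltac:(unfold sink in *; lia)) as [k Hk].
      destruct (sd_reach T p x f Hf k v ltac:(lia) Hk) as [k' Hk'].
      rewrite sg_lt in Hk' by lia. eauto.
  -
    intros v Hv. rewrite EN in *. fold (sink T) in *. unfold sd_fl.
    destruct (Nat.eqb_spec v (sink T)); auto. apply fl_pos. unfold sink in *; lia.
  -
    intros v Hv. rewrite EN. fold (sink T).
    pose proof (sd_inflow_sg T p x f v Hf ltac:(unfold sink; lia)) as Hi.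
    rewrite sg_lt in Hi by (unfold sink; lia). rewrite Hi.
    rewrite sd_fl_lt by (unfold sink; lia). apply cons_source; auto.
  -
    intros v Hv. rewrite EN in *. fold (sink T) in *.
    destruct (Nat.eq_dec v (sink T)).
    + subst. rewrite (sd_inflow_N T p x f Hf). unfold sd_fl. rewrite Nat.eqb_refl. auto.
    + pose proof (sd_inflow_sg T p x f v Hf ltac:(lia)) as Hi.
      rewrite sg_lt in Hi by lia. rewrite Hi.
      rewrite sd_fl_lt by lia. apply cons_steiner. unfold sink in *; lia.
  -
    rewrite EN. fold (sink T).
    pose proof (sd_inflow_sg T p x f (sink T) Hf ltac:(lia)) as Hi.
    rewrite sg_N in Hi. rewrite Hi. apply cons_sink.
Qed.

Definition Pn {Z zBS} (T : FQST Z zBS) p x (Y : nat -> point) (w : nat) : point :=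
  if inb (xs x) w p then Y (S (findk (xs x) w p)) else node_pos T w.

Lemma sd_pos {Z zBS} (T T' : FQST Z zBS) p x f Y : fwd T p x f ->
  nS T' = S (nS T) -> (forall i, spt T' i = sd_spt T p x Y i) ->
  forall w, (w <= sink T)%nat -> node_pos T' (sg (sink T) w) = Pn T p x Y w.
Proof.
  intros Hf HnS Hspt w Hw. unfold Pn.
  destruct (Nat.eq_dec w (sink T)).
  - subst. rewrite sg_N. destruct (inb (xs x) (sink T) p) eqn:E.
    { apply (xs_inb_lt T p x f) in E; auto. lia. }
    unfold node_pos, sink. rewrite HnS.
    destruct (Nat.ltb_spec (S (length Z + nS T)) (length Z)); [lia|].
    destruct (Nat.ltb_spec (S (length Z + nS T)) (length Z + S (nS T))); [lia|].
    destruct (Nat.ltb_spec (length Z + nS T) (length Z)); [lia|].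
    destruct (Nat.ltb_spec (length Z + nS T) (length Z + nS T)); [lia|]. reflexivity.
  - rewrite sg_lt by lia. unfold node_pos, sink in *. rewrite HnS.
    destruct (Nat.ltb_spec w (length Z)).
    + destruct (inb (xs x) w p) eqn:E; [|reflexivity].
      apply (xs_inb_lt T p x f) in E; auto. lia.
    + destruct (Nat.ltb_spec w (length Z + S (nS T))); [|lia].
      destruct (Nat.ltb_spec w (length Z + nS T)); [|lia].
      rewrite Hspt. unfold sd_spt. destruct (Nat.eqb_spec (w - length Z) (nS T)); [lia|].
      replace (length Z + (w - length Z))%nat with w by lia. reflexivity.
Qed.

Lemma sd_posN {Z zBS} (T T' : FQST Z zBS) p x Y :
  nS T' = S (nS T) -> (forall i, spt T' i = sd_spt T p x Y i) ->
  node_pos T' (sink T) = Y (S p).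
Proof.
  intros HnS Hspt. unfold node_pos, sink. rewrite HnS.
  destruct (Nat.ltb_spec (length Z + nS T) (length Z)).
  { destruct (nS T); lia. }
  destruct (Nat.ltb_spec (length Z + nS T) (length Z + S (nS T))); [|lia].
  rewrite Hspt. unfold sd_spt. replace (length Z + nS T - length Z)%nat with (nS T) by lia.
  rewrite Nat.eqb_refl. reflexivity.
Qed.

Lemma Pn_x {Z zBS} (T : FQST Z zBS) p x f Y k : fwd T p x f -> Y 0%nat = node_pos T (x 0%nat) ->
  (k <= p + 1)%nat -> Pn T p x Y (x k) = if Nat.eqb k (S p) then node_pos T (x k) else Y k.
Proof.
  intros Hf HY0 Hk. unfold Pn.
  destruct (inb (xs x) (x k) p) eqn:E.
  - apply (xs_inb_x T p x f k Hf Hk) in E. rewrite (xs_findk T p x f k Hf E).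
    destruct (Nat.eqb_spec k (S p)); [lia|]. f_equal; lia.
  - assert (~ (1 <= k <= p)%nat). { intros H. apply (xs_inb_x T p x f k Hf Hk) in H. congruence. }
    destruct (Nat.eqb_spec k (S p)); auto. assert (k = 0%nat) by lia. subst. auto.
Qed.

Lemma sd_cost {Z zBS} (T T' : FQST Z zBS) p x f Y : fwd T p x f ->
  Y 0%nat = node_pos T (x 0%nat) -> Y (S (S p)) = node_pos T (x (S p)) ->
  nS T' = S (nS T) -> (forall i, spt T' i = sd_spt T p x Y i) ->
  (forall w, nxt T' w = sd_nxt T p x w) -> (forall w, fl T' w = sd_fl T f w) ->
  cost T' = Rest T p x + f * rsum (fun k => dist2 (Y k) (Y (S k))) (S (S p)).
Proof.
  intros Hf HY0 HY1 HnS Hspt Hnxt Hfl. pose proof Hf as (H1 & H2 & H3 & H4 & H5 & H6).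
  destruct (H3 p ltac:(lia)) as [Hp1 Hp2].
  assert (HP := sd_pos T T' p x f Y Hf HnS Hspt).
  unfold cost. replace (sink T') with (S (sink T)) by (unfold sink; rewrite HnS; lia).
  rewrite rsum_S.
  rewrite (rsum_ext _ (fun v => fl T v * dist2 (Pn T p x Y v) (node_pos T' (sd_nxt T p x v)))).
  2:{ intros v Hv. rewrite Hfl, Hnxt, sd_fl_lt by auto. rewrite <- HP by lia. rewrite sg_lt by auto. reflexivity. }
  rewrite (rsum_mask _ x (sink T) (S p)).
  2:{ intros k Hk. apply H3; lia. }
  2:{ intros i j Hi Hj E. apply H2; auto; lia. }
  unfold Rest. rewrite (rsum_S (fun k => dist2 (Y k) (Y (S k))) (S p)), Rmult_plus_distr_l, <- rsum_scal.
  assert (Hm : forall v, (v < sink T)%nat -> inb x v (S p) = false ->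
     fl T v * dist2 (Pn T p x Y v) (node_pos T' (sd_nxt T p x v)) = term T v).
  { intros v Hv Hin. rewrite inb_false in Hin.
    assert (Hv1 : inb (xs x) v p = false). { apply inb_false. intros k Hk E. apply (Hin (S k)); [lia|auto]. }
    assert (Hv2 : inb (xs x) (nxt T v) p = false).
    { apply inb_false. intros k Hk E. unfold xs in E. symmetry in E. apply H5 in E; try lia; auto.
      apply (Hin k); [lia|]. rewrite E. f_equal; lia. }
    rewrite sd_nxt_other; [ | intros E; apply (Hin p); [lia|auto] | auto]. rewrite HP by (apply nxt_le; auto).
    unfold Pn, term. rewrite Hv1, Hv2. reflexivity. }
  rewrite (rsum_ext (fun v => if inb x v (S p) then 0 else _) (fun v => if inb x v (S p) then 0 else term T v)).
  2:{ intros v Hv. destruct (inb x v (S p)) eqn:E; auto. }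
  rewrite (rsum_ext (fun k => fl T (x k) * _) (fun k => f * dist2 (Y k) (Y (S k)))).
  2:{ intros k Hk. rewrite H6 by lia. rewrite Pn_x with (f := f) by (auto; lia).
      destruct (Nat.eqb_spec k (S p)); [lia|]. f_equal. f_equal.
      destruct (Nat.eq_dec k p).
      - subst. rewrite sd_nxt_xp. rewrite (sd_posN T T' p x Y HnS Hspt). reflexivity.
      - rewrite sd_nxt_other by (try apply H3; try lia; intros E; apply H2 in E; lia).
        rewrite (proj2 (H3 k ltac:(lia))). rewrite HP by (apply H1; lia).
        rewrite Pn_x with (f := f) by (auto; lia). destruct (Nat.eqb_spec (S k) (S p)); [lia|]. reflexivity. }
  rewrite Hfl, Hnxt. unfold sd_fl. rewrite Nat.eqb_refl.
  rewrite (sd_nxt_N T p x f Hf), HP by (apply H1; lia).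
  rewrite Pn_x with (f := f) by (auto; lia). rewrite Nat.eqb_refl.
  rewrite (sd_posN T T' p x Y HnS Hspt). rewrite <- HY1. lra.
Qed.

Definition rm_old (r i : nat) : nat := if Nat.ltb i r then i else S i.
Definition rm_new (r w : nat) : nat := if Nat.ltb w r then w else pred w.
Definition rm_nxt2 {Z zBS} (T : FQST Z zBS) (x : nat -> nat) (w : nat) : nat :=
  if Nat.eqb w (x 0%nat) then x 2%nat else nxt T w.
Definition rm_nxt {Z zBS} (T : FQST Z zBS) (x : nat -> nat) (i : nat) : nat :=
  rm_new (x 1%nat) (rm_nxt2 T x (rm_old (x 1%nat) i)).
Definition rm_fl {Z zBS} (T : FQST Z zBS) (x : nat -> nat) (i : nat) : R :=
  fl T (rm_old (x 1%nat) i).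
Definition xss (x : nat -> nat) := fun k => x (S (S k)).
Definition rm_spt {Z zBS} (T : FQST Z zBS) p (x : nat -> nat) (Y : nat -> point) (j : nat) : point :=
  let w := rm_old (x 1%nat) (length Z + j) in
  if inb (xss x) w (p - 1) then Y (S (findk (xss x) w (p - 1))) else spt T (w - length Z).

Lemma old_ne r i : rm_old r i <> r.
Proof. unfold rm_old. destruct (Nat.ltb_spec i r); lia. Qed.
Lemma new_old r i : rm_new r (rm_old r i) = i.
Proof. unfold rm_old, rm_new. destruct (Nat.ltb_spec i r); destruct (Nat.ltb_spec (S i) r); destruct (Nat.ltb_spec i r); lia. Qed.
Lemma old_new r w : w <> r -> rm_old r (rm_new r w) = w.
Proof. unfold rm_old, rm_new. intros. destruct (Nat.ltb_spec w r); destruct (Nat.ltb_spec (pred w) r); destruct (Nat.ltb_spec w r); lia. Qed.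
Lemma new_inj r a b : a <> r -> b <> r -> rm_new r a = rm_new r b -> a = b.
Proof. intros Ha Hb E. rewrite <- (old_new r a Ha), <- (old_new r b Hb), E. auto. Qed.
Lemma eqb_new r a b : a <> r -> b <> r -> Nat.eqb (rm_new r a) (rm_new r b) = Nat.eqb a b.
Proof.
  intros. destruct (Nat.eqb_spec a b) as [e|e], (Nat.eqb_spec (rm_new r a) (rm_new r b)) as [e'|e']; auto.
  all: exfalso.
  all: try (apply e; exact (new_inj r a b H H0 e')).
  all: try (subst; apply e'; reflexivity).
Qed.
Lemma new_lt r w : (w < r)%nat -> rm_new r w = w.
Proof. unfold rm_new. intros. destruct (Nat.ltb_spec w r); lia. Qed.
Lemma new_gt r w : (r < w)%nat -> rm_new r w = pred w.
Proof. unfold rm_new. intros. destruct (Nat.ltb_spec w r); lia. Qed.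

Lemma fwd_r {Z zBS} (T : FQST Z zBS) p x f : fwd T p x f -> (1 <= p)%nat ->
  (length Z <= x 1%nat < sink T)%nat /\ x 0%nat <> x 1%nat /\ x 2%nat <> x 1%nat.
Proof.
  intros (H1 & H2 & H3 & H4 & H5 & H6) Hp. split; [split|split].
  - apply H4; lia.
  - apply H3; lia.
  - intros E. apply H2 in E; lia.
  - intros E. apply H2 in E; lia.
Qed.

Lemma nxt2_ok {Z zBS} (T : FQST Z zBS) p x f a : fwd T p x f -> (1 <= p)%nat -> (a < sink T)%nat ->
  rm_nxt2 T x a <> x 1%nat /\ (rm_nxt2 T x a <= sink T)%nat.
Proof.
  intros Hf Hp Ha. pose proof Hf as (H1 & H2 & H3 & H4 & H5 & H6).
  destruct (fwd_r T p x f Hf Hp) as (Hr & Hr0 & Hr2).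
  unfold rm_nxt2. destruct (Nat.eqb_spec a (x 0%nat)).
  - split; auto. apply H1; lia.
  - split; [|apply nxt_le; auto]. intros E. apply (H5 1%nat) in E; auto; lia.
Qed.

Lemma rm_inflow {Z zBS} (T : FQST Z zBS) p x f w : fwd T p x f -> (1 <= p)%nat ->
  (w <= sink T)%nat -> w <> x 1%nat ->
  rsum (fun i => if Nat.eqb (rm_nxt T x i) (rm_new (x 1%nat) w) then rm_fl T x i else 0) (pred (sink T))
  = inflow T w.
Proof.
  intros Hf Hp Hw Hwr. pose proof Hf as (H1 & H2 & H3 & H4 & H5 & H6).
  destruct (fwd_r T p x f Hf Hp) as (Hr & Hr0 & Hr2).
  set (r := x 1%nat) in *.
  set (g := fun a => if Nat.eqb (rm_new r (rm_nxt2 T x a)) (rm_new r w) then fl T a else 0).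
  pose proof (rsum_skip g (pred (sink T)) r ltac:(lia)) as Hs.
  replace (S (pred (sink T))) with (sink T) in Hs by lia.
  unfold rm_nxt, rm_fl. fold r. change (rsum (fun i => g (rm_old r i)) (pred (sink T)) = inflow T w).
  unfold rm_old.
  assert (E1 : rsum (fun i => g (if Nat.ltb i r then i else S i)) (pred (sink T)) = rsum g (sink T) - g r) by lra.
  rewrite E1. unfold inflow.
  rewrite (rsum_change g (fun u => if Nat.eqb (nxt T u) w then fl T u else 0) (sink T) (x 0%nat)).
  - assert (x 0%nat < sink T)%nat by (apply H3; lia).
    unfold g. rewrite !eqb_new by (auto; apply (nxt2_ok T p x f); auto; lia).
    unfold rm_nxt2. rewrite Nat.eqb_refl.
    destruct (Nat.eqb_spec r (x 0%nat)); [congruence|].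
    rewrite (proj2 (H3 0%nat ltac:(lia))).
    assert (Er : nxt T r = x 2%nat) by exact (proj2 (H3 1%nat ltac:(lia))).
    assert (Fr : fl T r = f) by exact (H6 1%nat ltac:(lia)).
    rewrite Er, Fr. change (x 1%nat) with r.
    destruct (Nat.eqb_spec r w); [congruence|].
    rewrite (H6 0%nat) by lia.
    destruct (Nat.eqb_spec (x 2%nat) w); lra.
  - apply H3; lia.
  - intros u Hu Hne. unfold g. rewrite eqb_new by (auto; apply (nxt2_ok T p x f); auto).
    unfold rm_nxt2. destruct (Nat.eqb_spec u (x 0%nat)); [congruence|]. reflexivity.
Qed.

Lemma rm_reach {Z zBS} (T : FQST Z zBS) p x f : fwd T p x f -> (1 <= p)%nat ->
  forall k v, (v <= sink T)%nat -> v <> x 1%nat -> Nat.iter k (nxt T) v = sink T ->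
  exists k', Nat.iter k' (rm_nxt T x) (rm_new (x 1%nat) v) = rm_new (x 1%nat) (sink T).
Proof.
  intros Hf Hp. pose proof Hf as (H1 & H2 & H3 & H4 & H5 & H6).
  destruct (fwd_r T p x f Hf Hp) as (Hr & Hr0 & Hr2).
  intros k. induction k as [k IH] using lt_wf_ind. intros v Hv Hvr Hk.
  destruct (Nat.eq_dec v (sink T)). { subst. exists 0%nat. reflexivity. }
  destruct k. { simpl in Hk. lia. }
  rewrite Nat.iter_succ_r in Hk.
  assert (Hstep : rm_nxt T x (rm_new (x 1%nat) v) = rm_new (x 1%nat) (rm_nxt2 T x v)).
  { unfold rm_nxt. rewrite old_new by auto. reflexivity. }
  destruct (Nat.eq_dec v (x 0%nat)).
  - subst v. rewrite (proj2 (H3 0%nat ltac:(lia))) in Hk.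
    destruct k. { simpl in Hk. lia. }
    rewrite Nat.iter_succ_r, (proj2 (H3 1%nat ltac:(lia))) in Hk.
    destruct (IH k ltac:(lia) (x 2%nat) ltac:(apply H1; lia) Hr2 Hk) as [k' Hk'].
    exists (S k'). rewrite Nat.iter_succ_r, Hstep. unfold rm_nxt2. rewrite Nat.eqb_refl. auto.
  - destruct (nxt2_ok T p x f v Hf Hp ltac:(lia)) as [A1 A2].
    unfold rm_nxt2 in A1, A2. destruct (Nat.eqb_spec v (x 0%nat)); [congruence|].
    destruct (IH k ltac:(lia) (nxt T v) A2 A1 Hk) as [k' Hk'].
    exists (S k'). rewrite Nat.iter_succ_r, Hstep. unfold rm_nxt2.
    destruct (Nat.eqb_spec v (x 0%nat)); [congruence|]. auto.
Qed.

Lemma old_bounds r i : (rm_old r i = i \/ rm_old r i = S i).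
Proof. unfold rm_old. destruct (Nat.ltb i r); auto. Qed.

Lemma old_lt r i N : (r < N)%nat -> (i < pred N)%nat -> (rm_old r i < N)%nat.
Proof. unfold rm_old. intros. destruct (Nat.ltb_spec i r); lia. Qed.

Lemma old_ge r i n : (n <= r)%nat -> (n <= i)%nat -> (n <= rm_old r i)%nat.
Proof. unfold rm_old. intros. destruct (Nat.ltb_spec i r); lia. Qed.

Lemma old_lt_r r i : (i < r)%nat -> rm_old r i = i.
Proof. unfold rm_old. intros. destruct (Nat.ltb_spec i r); lia. Qed.

Lemma new_le r w N : (r < N)%nat -> (w <= N)%nat -> w <> r -> (rm_new r w <= pred N)%nat.
Proof. unfold rm_new. intros. destruct (Nat.ltb_spec w r); lia. Qed.

Lemma xss_inb_lt {Z zBS} (T : FQST Z zBS) p x f w : fwd T p x f ->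
  inb (xss x) w (p - 1) = true -> (length Z <= w < sink T)%nat /\ w <> x 1%nat.
Proof.
  intros (H1 & H2 & H3 & H4 & H5 & H6) H. apply inb_true in H. destruct H as [k [Hk E]].
  unfold xss in E. subst. split; [split; [apply H4; lia|apply H3; lia]|].
  intros E. apply H2 in E; lia.
Qed.

Lemma rm_build {Z zBS} (T : FQST Z zBS) p x f Y : fwd T p x f -> (1 <= p)%nat -> Yok T Y 1 (p - 1) ->
  exists T' : FQST Z zBS, S (nS T') = nS T /\ (forall i, spt T' i = rm_spt T p x Y i) /\
    (forall w, nxt T' w = rm_nxt T x w) /\ (forall w, fl T' w = rm_fl T x w).
Proof.
  intros Hf Hp [HYa HYi]. pose proof Hf as (H1 & H2 & H3 & H4 & H5 & H6).
  destruct (fwd_r T p x f Hf Hp) as (Hr & Hr0 & Hr2).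
  assert (HnS : (1 <= nS T)%nat) by (unfold sink in Hr; lia).
  assert (EN : (length Z + pred (nS T) = pred (sink T))%nat) by (unfold sink; lia).
  assert (Hspt_old : forall j, (j < pred (nS T))%nat ->
     (length Z <= rm_old (x 1%nat) (length Z + j) < sink T)%nat /\
     (rm_old (x 1%nat) (length Z + j) - length Z < nS T)%nat).
  { intros j Hj. pose proof (old_bounds (x 1%nat) (length Z + j)). unfold sink in *. lia. }
  assert (Hold_inj : forall i j, rm_old (x 1%nat) (length Z + i) = rm_old (x 1%nat) (length Z + j) -> i = j).
  { intros i j E. apply (f_equal (rm_new (x 1%nat))) in E. rewrite !new_old in E. lia. }
  unshelve eexists (Build_FQST Z zBS (pred (nS T)) (rm_spt T p x Y) (rm_nxt T x) (rm_fl T x) _ _ _ _ _ _ _ _ _);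
    [ | | | | | | | | | split; [simpl; lia|split; [|split]]; intros; reflexivity].
  -
    intros i j Hi Hj. unfold rm_spt.
    destruct (Hspt_old i Hi) as [Ai Bi]. destruct (Hspt_old j Hj) as [Aj Bj].
    set (wi := rm_old (x 1%nat) (length Z + i)) in *. set (wj := rm_old (x 1%nat) (length Z + j)) in *.
    destruct (inb (xss x) wi (p - 1)) eqn:Ei; destruct (inb (xss x) wj (p - 1)) eqn:Ej.
    + destruct (findk_spec _ _ _ Ei) as [Hk1 E1]. destruct (findk_spec _ _ _ Ej) as [Hk2 E2].
      intros E. apply HYi in E; try lia.
      assert (findk (xss x) wi (p - 1) = findk (xss x) wj (p - 1)) as E3 by lia.
      rewrite E3 in E1. rewrite E1 in E2. apply Hold_inj. auto.
    + destruct (findk_spec _ _ _ Ei) as [Hk1 E1]. intros E. exfalso.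
      apply (proj2 (proj2 (HYa (S (findk (xss x) wi (p - 1))) ltac:(lia))) (wj - length Z)%nat Bj). auto.
    + destruct (findk_spec _ _ _ Ej) as [Hk1 E1]. intros E. exfalso.
      apply (proj2 (proj2 (HYa (S (findk (xss x) wj (p - 1))) ltac:(lia))) (wi - length Z)%nat Bi). auto.
    + intros E. apply spt_inj in E; auto. apply Hold_inj. fold wi wj. lia.
  -
    intros i Hi. unfold rm_spt. destruct (Hspt_old i Hi) as [Ai Bi].
    destruct (inb (xss x) (rm_old (x 1%nat) (length Z + i)) (p - 1)) eqn:Ei.
    + destruct (findk_spec _ _ _ Ei). apply (HYa (S (findk (xss x) (rm_old (x 1%nat) (length Z + i)) (p - 1)))); lia.
    + apply spt_notZ; lia.
  -
    intros i Hi. unfold rm_spt. destruct (Hspt_old i Hi) as [Ai Bi].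
    destruct (inb (xss x) (rm_old (x 1%nat) (length Z + i)) (p - 1)) eqn:Ei.
    + destruct (findk_spec _ _ _ Ei). apply (HYa (S (findk (xss x) (rm_old (x 1%nat) (length Z + i)) (p - 1)))); lia.
    + apply spt_notBS; lia.
  -
    intros v Hv. rewrite EN in *. unfold rm_nxt.
    pose proof (old_lt (x 1%nat) v (sink T) ltac:(lia) Hv).
    destruct (nxt2_ok T p x f (rm_old (x 1%nat) v) Hf Hp H) as [A1 A2].
    apply new_le; auto; lia.
  -
    intros v Hv. rewrite EN in *.
    pose proof (old_lt (x 1%nat) v (sink T) ltac:(lia) Hv) as Hov.
    destruct (reach_sink Z zBS T (rm_old (x 1%nat) v) ltac:(unfold sink in Hov; lia)) as [k Hk].
    destruct (rm_reach T p x f Hf Hp k (rm_old (x 1%nat) v) ltac:(lia) (old_ne _ _) Hk) as [k' Hk'].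
    rewrite new_old, new_gt in Hk' by lia. eauto.
  -
    intros v Hv. rewrite EN in *. unfold rm_fl. apply fl_pos.
    pose proof (old_lt (x 1%nat) v (sink T) ltac:(lia) Hv). unfold sink in *; lia.
  -
    intros v Hv. rewrite EN.
    pose proof (rm_inflow T p x f v Hf Hp ltac:(unfold sink in *; lia) ltac:(lia)) as Hi.
    rewrite new_lt in Hi by lia. rewrite Hi.
    unfold rm_fl. rewrite old_lt_r by lia. apply cons_source; auto.
  -
    intros v Hv. rewrite EN in *.
    pose proof (old_lt (x 1%nat) v (sink T) ltac:(lia) ltac:(lia)) as Hov.
    pose proof (rm_inflow T p x f (rm_old (x 1%nat) v) Hf Hp ltac:(lia) (old_ne _ _)) as Hi.
    rewrite new_old in Hi. rewrite Hi. unfold rm_fl. apply cons_steiner.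
    split; [apply old_ge; lia|unfold sink in Hov; lia].
  -
    rewrite EN.
    pose proof (rm_inflow T p x f (sink T) Hf Hp ltac:(lia) ltac:(lia)) as Hi.
    rewrite new_gt in Hi by lia. rewrite Hi. apply cons_sink.
Qed.

Definition Pr {Z zBS} (T : FQST Z zBS) p x (Y : nat -> point) (w : nat) : point :=
  if inb (xss x) w (p - 1) then Y (S (findk (xss x) w (p - 1))) else node_pos T w.

Lemma xss_inb_x {Z zBS} (T : FQST Z zBS) p x f k : fwd T p x f -> (k <= p+1)%nat ->
  inb (xss x) (x k) (p - 1) = true <-> (2 <= k <= p)%nat.
Proof.
  intros (H1 & H2 & H3 & H4 & H5 & H6) Hk. rewrite inb_true. unfold xss. split.
  - intros [j [Hj E]]. apply H2 in E; lia.
  - intros Hk'. exists (k - 2)%nat. split; [lia|]. f_equal; lia.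
Qed.

Lemma xss_findk {Z zBS} (T : FQST Z zBS) p x f k : fwd T p x f -> (2 <= k <= p)%nat ->
  findk (xss x) (x k) (p - 1) = (k - 2)%nat.
Proof.
  intros Hf Hk. destruct Hf as (H1 & H2 & H3 & H4 & H5 & H6).
  replace (x k) with (xss x (k-2)%nat) by (unfold xss; f_equal; lia).
  apply findk_inj; [lia|]. intros i j Hi Hj E. unfold xss in E. apply H2 in E; lia.
Qed.

Lemma Pr_x {Z zBS} (T : FQST Z zBS) p x f Y k : fwd T p x f ->
  Y 0%nat = node_pos T (x 0%nat) -> Y p = node_pos T (x (S p)) ->
  (k <= p + 1)%nat -> k <> 1%nat -> Pr T p x Y (x k) = Y (pred k).
Proof.
  intros Hf HY0 HY1 Hk Hk1. unfold Pr.
  destruct (inb (xss x) (x k) (p - 1)) eqn:E.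
  - apply (xss_inb_x T p x f k Hf Hk) in E. rewrite (xss_findk T p x f k Hf E). f_equal; lia.
  - assert (~ (2 <= k <= p)%nat). { intros H. apply (xss_inb_x T p x f k Hf Hk) in H. congruence. }
    destruct k. { auto. }
    assert (k = p) by lia. subst. simpl. auto.
Qed.

Lemma rm_pos {Z zBS} (T T' : FQST Z zBS) p x f Y : fwd T p x f -> (1 <= p)%nat ->
  S (nS T') = nS T -> (forall i, spt T' i = rm_spt T p x Y i) ->
  forall w, (w <= sink T)%nat -> w <> x 1%nat -> node_pos T' (rm_new (x 1%nat) w) = Pr T p x Y w.
Proof.
  intros Hf Hp HnS Hspt w Hw Hwr.
  destruct (fwd_r T p x f Hf Hp) as (Hr & Hr0 & Hr2).
  unfold Pr. unfold sink in *.
  destruct (Nat.eq_dec w (length Z + nS T)).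
  - subst. rewrite new_gt by lia.
    destruct (inb (xss x) (length Z + nS T) (p - 1)) eqn:E.
    { apply (xss_inb_lt T p x f) in E; auto. unfold sink in E. lia. }
    unfold node_pos, sink.
    destruct (Nat.ltb_spec (pred (length Z + nS T)) (length Z)); [lia|].
    destruct (Nat.ltb_spec (pred (length Z + nS T)) (length Z + nS T')); [lia|].
    destruct (Nat.ltb_spec (length Z + nS T) (length Z)); [lia|].
    destruct (Nat.ltb_spec (length Z + nS T) (length Z + nS T)); [lia|]. reflexivity.
  - unfold node_pos, sink.
    destruct (Nat.ltb_spec w (length Z)).
    + rewrite new_lt by lia.
      destruct (Nat.ltb_spec w (length Z)); [|lia].
      destruct (inb (xss x) w (p - 1)) eqn:E; [|reflexivity].
      apply (xss_inb_lt T p x f) in E; auto. lia.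
    + assert (Hnw : (length Z <= rm_new (x 1%nat) w < length Z + nS T')%nat).
      { unfold rm_new. destruct (Nat.ltb_spec w (x 1%nat)); lia. }
      destruct (Nat.ltb_spec (rm_new (x 1%nat) w) (length Z)); [lia|].
      destruct (Nat.ltb_spec (rm_new (x 1%nat) w) (length Z + nS T')); [|lia].
      destruct (Nat.ltb_spec w (length Z + nS T)); [|lia].
      rewrite Hspt. unfold rm_spt.
      replace (length Z + (rm_new (x 1%nat) w - length Z))%nat with (rm_new (x 1%nat) w) by lia.
      rewrite old_new by auto. reflexivity.
Qed.

Lemma rm_cost {Z zBS} (T T' : FQST Z zBS) p x f Y : fwd T p x f -> (1 <= p)%nat ->
  Y 0%nat = node_pos T (x 0%nat) -> Y p = node_pos T (x (S p)) ->
  S (nS T') = nS T -> (forall i, spt T' i = rm_spt T p x Y i) ->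
  (forall w, nxt T' w = rm_nxt T x w) -> (forall w, fl T' w = rm_fl T x w) ->
  cost T' = Rest T p x + f * rsum (fun k => dist2 (Y k) (Y (S k))) p.
Proof.
  intros Hf Hp HY0 HY1 HnS Hspt Hnxt Hfl. pose proof Hf as (H1 & H2 & H3 & H4 & H5 & H6).
  destruct (fwd_r T p x f Hf Hp) as (Hr & Hr0 & Hr2).
  assert (HP := rm_pos T T' p x f Y Hf Hp HnS Hspt).
  set (r := x 1%nat) in *.
  set (g := fun a => fl T a * dist2 (node_pos T' (rm_new r a)) (node_pos T' (rm_new r (rm_nxt2 T x a)))).
  set (Hn := fun a => fl T a * dist2 (Pr T p x Y a) (Pr T p x Y (rm_nxt2 T x a))).
  unfold cost. replace (sink T') with (pred (sink T)) by (unfold sink in *; lia).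
  rewrite (rsum_ext _ (fun i => g (if Nat.ltb i r then i else S i))).
  2:{ intros i Hi. unfold g. rewrite Hfl, Hnxt. unfold rm_fl, rm_nxt. fold r. unfold rm_old.
      f_equal. f_equal. rewrite <- (new_old r i) at 1. unfold rm_old. reflexivity. }
  pose proof (rsum_skip g (pred (sink T)) r ltac:(lia)) as Hs.
  replace (S (pred (sink T))) with (sink T) in Hs by lia.
  assert (Hc : rsum g (sink T) = rsum Hn (sink T) + g r - Hn r).
  { apply rsum_change; [lia|]. intros a Ha Hne. unfold g, Hn.
    destruct (nxt2_ok T p x f a Hf Hp Ha) as [A1 A2].
    rewrite !HP by (auto; lia). reflexivity. }
  rewrite (rsum_mask Hn x (sink T) (S p)) in Hc.
  2:{ intros k Hk. apply H3; lia. }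
  2:{ intros i j Hi Hj E. apply H2; auto; lia. }
  rewrite rsum_shift in Hc.
  replace (rsum (fun i => Hn (x (S i))) p) with (rsum (fun i => Hn (x (S i))) (S (p - 1))) in Hc
    by (f_equal; lia).
  rewrite (rsum_shift (fun i => Hn (x (S i))) (p - 1)) in Hc.
  replace (rsum (fun k => dist2 (Y k) (Y (S k))) p) with (rsum (fun k => dist2 (Y k) (Y (S k))) (S (p - 1)))
    by (f_equal; lia).
  rewrite rsum_shift.
  assert (Hm : rsum (fun v => if inb x v (S p) then 0 else Hn v) (sink T) = Rest T p x).
  { unfold Rest. apply rsum_ext. intros v Hv. destruct (inb x v (S p)) eqn:Hin; auto.
    rewrite inb_false in Hin.
    assert (Hv1 : inb (xss x) v (p - 1) = false).
    { apply inb_false. intros k Hk E. apply (Hin (S (S k))); [lia|auto]. }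
    assert (Hv2 : inb (xss x) (nxt T v) (p - 1) = false).
    { apply inb_false. intros k Hk E. unfold xss in E. symmetry in E. apply H5 in E; try lia; auto.
      apply (Hin (S k)); [lia|]. rewrite E. f_equal; lia. }
    unfold Hn, Pr, term, rm_nxt2. destruct (Nat.eqb_spec v (x 0%nat)).
    { exfalso. apply (Hin 0%nat); [lia|auto]. }
    rewrite Hv1, Hv2. reflexivity. }
  rewrite Hm in Hc.
  assert (E0 : Hn (x 0%nat) = f * dist2 (Y 0%nat) (Y 1%nat)).
  { unfold Hn. rewrite H6 by lia. unfold rm_nxt2. rewrite Nat.eqb_refl.
    rewrite !Pr_x with (f := f) by (auto; lia). reflexivity. }
  assert (Ek : forall k, (k < p - 1)%nat ->
     Hn (x (S (S k))) = f * dist2 (Y (S k)) (Y (S (S k)))).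
  { intros k Hk. unfold Hn. rewrite H6 by lia. unfold rm_nxt2.
    destruct (Nat.eqb_spec (x (S (S k))) (x 0%nat)). { apply H2 in e; lia. }
    rewrite (proj2 (H3 (S (S k)) ltac:(lia))).
    rewrite !Pr_x with (f := f) by (auto; lia). reflexivity. }
  rewrite (rsum_ext (fun k => Hn (x (S (S k)))) (fun k => f * dist2 (Y (S k)) (Y (S (S k))))) in Hc by auto.
  rewrite rsum_scal in Hc. rewrite E0 in Hc. fold r in Hc. lra.
Qed.

Definition tt (m : nat) (e : R) (k : nat) : R :=
  if Nat.eqb k 0 then 0 else if Nat.eqb k m then 1 else INR k / INR m + e.

Lemma tt_sum m e : (1 <= m)%nat ->
  rsum (fun k => (tt m e k - tt m e (S k))^2) m <= 1 / INR m + 2 * e^2.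
Proof.
  intros Hm. destruct m as [|m]; [lia|]. destruct m as [|j].
  - simpl. unfold tt. simpl. pose proof (pow2_ge_0 e). replace (1 / 1) with 1 by field. simpl in *. lra.
  - rewrite rsum_S, rsum_shift.
    assert (HM : 0 < INR (S (S j))) by (apply lt_0_INR; lia).
    rewrite (rsum_ext _ (fun _ => (1 / INR (S (S j)))^2)).
    2:{ intros i Hi. unfold tt. simpl Nat.eqb.
        destruct (Nat.eqb_spec i (S j)); [lia|]. destruct (Nat.eqb_spec (S i) (S j)); [lia|].
        rewrite (S_INR (S i)). destruct (Nat.eqb_spec i j); [lia|]. field. lra. }
    rewrite rsum_const. unfold tt. simpl Nat.eqb.
    destruct (Nat.eqb_spec j (S j)); [lia|]. rewrite Nat.eqb_refl.
    replace (INR (S (S j))) with (INR j + 2) in * by (rewrite !S_INR; ring).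
    replace (INR (S j)) with (INR j + 1) by (rewrite S_INR; ring).
    rewrite INR_1. right. field. lra.
Qed.

Lemma pos_inj {Z zBS} (T : FQST Z zBS) a b : NoDup Z -> ~ In zBS Z ->
  (a <= sink T)%nat -> (b <= sink T)%nat -> node_pos T a = node_pos T b -> a = b.
Proof.
  intros HZ HB Ha Hb. unfold node_pos, sink in *.
  assert (Hsz : forall i, (i < length Z)%nat -> In (nth i Z (0,0)) Z) by (intros; apply nth_In; auto).
  destruct (Nat.ltb_spec a (length Z)); destruct (Nat.ltb_spec b (length Z)).
  - intros E. eapply NoDup_nth; eauto.
  - destruct (Nat.ltb_spec b (length Z + nS T)).
    + intros E. exfalso. apply (spt_notZ Z zBS T (b - length Z)); [lia|]. rewrite <- E. auto.
    + intros E. exfalso. apply HB. rewrite <- E. auto.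
  - destruct (Nat.ltb_spec a (length Z + nS T)).
    + intros E. exfalso. apply (spt_notZ Z zBS T (a - length Z)); [lia|]. rewrite E. auto.
    + intros E. exfalso. apply HB. rewrite E. auto.
  - destruct (Nat.ltb_spec a (length Z + nS T)); destruct (Nat.ltb_spec b (length Z + nS T)).
    + intros E. apply spt_inj in E; lia.
    + intros E. exfalso. apply (spt_notBS Z zBS T (a - length Z)); [lia|auto].
    + intros E. exfalso. apply (spt_notBS Z zBS T (b - length Z)); [lia|auto].
    + lia.
Qed.

Lemma line_choice {Z zBS} (T : FQST Z zBS) (u v : point) m d : u <> v -> 0 < d ->
  exists e, 0 < e < d /\ Yok T (fun k => Lpt u v (tt m e k)) 1 (m - 1).
Proof.
  intros Huv Hd.
  set (F := Z ++ zBS :: map (spt T) (seq 0 (nS T))).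
  set (B := flat_map (fun z => map (fun k => tpar u v z - INR k / INR m) (seq 1 (m - 1))) F).
  destruct (avoid_list B d Hd) as [e [He HB]].
  exists e. split; auto.
  assert (Htt : forall k, (1 <= k <= m - 1)%nat -> tt m e k = INR k / INR m + e).
  { intros k Hk. unfold tt. destruct (Nat.eqb_spec k 0); [lia|]. destruct (Nat.eqb_spec k m); [lia|]. auto. }
  assert (Hbad : forall k z, (1 <= k <= m - 1)%nat -> In z F -> Lpt u v (tt m e k) <> z).
  { intros k z Hk Hz E. apply (HB (tpar u v z - INR k / INR m)).
    - unfold B. apply in_flat_map. exists z. split; auto. apply in_map_iff. exists k. split; auto.
      apply in_seq. lia.
    - rewrite <- E, tpar_L by auto. rewrite Htt by auto. ring. }
  split.
  - intros k Hk. split; [|split].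
    + intros Hin. apply (Hbad k (Lpt u v (tt m e k)) Hk); auto. unfold F. apply in_or_app; auto.
    + intros E. apply (Hbad k zBS Hk); auto. unfold F. apply in_or_app; right; left; auto.
    + intros i Hi E. apply (Hbad k (spt T i) Hk); auto. unfold F. apply in_or_app; right; right.
      apply in_map. apply in_seq. lia.
  - intros j k Hj Hk E. apply L_inj in E; auto. rewrite !Htt in E by auto.
    assert (0 < INR m) by (apply lt_0_INR; lia).
    assert (INR j = INR k).
    { apply (Rmult_eq_reg_r (/ INR m)); [|apply Rinv_neq_0_compat; lra]. unfold Rdiv in E. lra. }
    apply INR_eq; auto.
Qed.

Lemma limit_arg (A c K : R) : 0 <= K ->
  (forall d, 0 < d -> exists e, 0 < e < d /\ A <= c + K * e^2) -> A <= c.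
Proof.
  intros HK H. destruct (Rle_or_lt A c) as [|Hlt]; auto. exfalso.
  set (d := Rmin 1 ((A - c) / (K + 1))).
  assert (Hd : 0 < d). { apply Rmin_glb_lt; [lra|]. unfold Rdiv; apply Rmult_lt_0_compat; [lra|apply Rinv_0_lt_compat; lra]. }
  destruct (H d Hd) as [e [He HA]].
  assert (e < 1) by (pose proof (Rmin_l 1 ((A - c) / (K + 1))); unfold d in He; lra).
  assert (e < (A - c) / (K + 1)) by (pose proof (Rmin_r 1 ((A - c) / (K + 1))); unfold d in He; lra).
  assert (e * (K + 1) < A - c).
  { apply (Rmult_lt_compat_r (K + 1)) in H1; [|lra]. unfold Rdiv in H1.
    rewrite Rmult_assoc, Rinv_l in H1 by lra. lra. }
  assert (K * e^2 <= K * e) by (simpl; nra). nra.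
Qed.

Lemma core {Z zBS} (T : FQST Z zBS) c p x f : NoDup Z -> ~ In zBS Z -> 0 < c -> is_MFQST c T ->
  fwd T p x f ->
  INR p * INR (p + 1) <= f * dist2 (node_pos T (x 0%nat)) (node_pos T (x (p + 1)%nat)) / c
  <= INR (p + 2) * INR (p + 1).
Proof.
  intros HZ HB Hc Hmin Hf. pose proof Hf as (H1 & H2 & H3 & H4 & H5 & H6).
  replace (p + 1)%nat with (S p) by lia.
  set (u := node_pos T (x 0%nat)). set (v := node_pos T (x (S p))).
  assert (Huv : u <> v).
  { intros E. apply pos_inj in E; auto; try (apply H1; lia). apply H2 in E; lia. }
  set (D := dist2 u v).
  assert (HD : 0 < D) by (apply dist2_pos; auto).
  assert (Hfpos : 0 < f). { rewrite <- (H6 0%nat) by lia. apply fl_pos. apply (H3 0%nat); lia. }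
  set (Lp := rsum (fun k => dist2 (node_pos T (x k)) (node_pos T (x (S k)))) (S p)).
  assert (HL : D <= INR (S p) * Lp) by (apply (path_cs (fun k => node_pos T (x k)) (S p))).
  assert (Hcost : cost T = Rest T p x + f * Lp) by (apply cost_split; auto).
  assert (HSp : 0 < INR (S p)) by (apply lt_0_INR; lia).
  assert (HL' : D / INR (S p) <= Lp).
  { apply (Rmult_le_reg_l (INR (S p))); auto. field_simplify; lra. }
  assert (Hpath : forall m e, (1 <= m)%nat ->
     rsum (fun k => dist2 (Lpt u v (tt m e k)) (Lpt u v (tt m e (S k)))) m <= D * (1 / INR m + 2 * e^2)).
  { intros m e Hm. rewrite (rsum_ext _ (fun k => D * (tt m e k - tt m e (S k))^2)).
    2:{ intros; rewrite dist2_L; fold D; ring. }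
    rewrite rsum_scal. apply Rmult_le_compat_l; [lra|]. apply tt_sum; auto. }
  split.
  -
    destruct (Nat.eq_dec p 0) as [->|Hp].
    { replace (INR 0) with 0 by reflexivity. rewrite Rmult_0_l. unfold Rdiv.
      apply Rmult_le_pos; [apply Rmult_le_pos; [lra|apply dist2_nonneg] | left; apply Rinv_0_lt_compat; lra]. }
    assert (Hp1 : (1 <= p)%nat) by lia.
    assert (Hkey : f * D / INR (S p) + c <= f * D / INR p).
    { apply (limit_arg _ _ (2 * f * D)); [nra|].
      intros d Hd. destruct (line_choice T u v p d Huv Hd) as [e [He HY]].
      exists e. split; auto.
      set (Y := fun k => Lpt u v (tt p e k)).
      destruct (rm_build T p x f Y Hf Hp1 HY) as [T' (HnS & Hspt & Hnxt & Hfl)].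
      assert (HY0 : Y 0%nat = node_pos T (x 0%nat)) by (unfold Y, tt; simpl; apply L0).
      assert (HY1 : Y p = node_pos T (x (S p))).
      { unfold Y, tt. destruct (Nat.eqb_spec p 0); [lia|]. rewrite Nat.eqb_refl. apply L1. }
      pose proof (rm_cost T T' p x f Y Hf Hp1 HY0 HY1 HnS Hspt Hnxt Hfl) as Hc'.
      pose proof (Hmin T') as Hm. unfold costc in Hm. rewrite Hcost, Hc', <- HnS, S_INR, Rmult_plus_distr_l, Rmult_1_r in Hm.
      pose proof (Hpath p e Hp1) as Hpp. fold Y in Hpp.
      assert (f * Lp + c <= f * (D * (1 / INR p + 2 * e ^ 2))).
      { apply Rle_trans with (f * rsum (fun k => dist2 (Y k) (Y (S k))) p); [lra|].
        apply Rmult_le_compat_l; [lra|exact Hpp]. }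
      assert (f * (D / INR (S p)) <= f * Lp) by (apply Rmult_le_compat_l; lra).
      assert (HpI : 0 < INR p) by (apply lt_0_INR; lia).
      unfold Rdiv in *. rewrite Rmult_assoc. lra. }
    assert (HpI : 0 < INR p) by (apply lt_0_INR; lia).
    rewrite S_INR in *.
    apply (Rmult_le_reg_r c); auto. replace (f * D / c * c) with (f * D) by (field; lra).
    assert (c <= f * D / INR p - f * D / (INR p + 1)) by lra.
    replace (f * D / INR p - f * D / (INR p + 1)) with (f * D / (INR p * (INR p + 1))) in H by (field; lra).
    apply (Rmult_le_compat_l (INR p * (INR p + 1))) in H; [|nra].
    replace (INR p * (INR p + 1) * (f * D / (INR p * (INR p + 1)))) with (f * D) in H by (field; lra).
    lra.
  -
    assert (Hkey : f * D / INR (S p) <= c + f * D / INR (S (S p))).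
    { apply (limit_arg _ _ (2 * f * D)); [nra|].
      intros d Hd. destruct (line_choice T u v (S (S p)) d Huv Hd) as [e [He HY]].
      exists e. split; auto.
      set (Y := fun k => Lpt u v (tt (S (S p)) e k)).
      replace (S (S p) - 1)%nat with (S p) in HY by lia.
      destruct (sd_build T p x f Y Hf HY) as [T' (HnS & Hspt & Hnxt & Hfl)].
      assert (HY0 : Y 0%nat = node_pos T (x 0%nat)) by (unfold Y, tt; simpl; apply L0).
      assert (HY1 : Y (S (S p)) = node_pos T (x (S p))).
      { unfold Y, tt. simpl Nat.eqb. rewrite Nat.eqb_refl. apply L1. }
      pose proof (sd_cost T T' p x f Y Hf HY0 HY1 HnS Hspt Hnxt Hfl) as Hc'.
      pose proof (Hmin T') as Hm. unfold costc in Hm. rewrite Hcost, Hc', HnS, S_INR, Rmult_plus_distr_l, Rmult_1_r in Hm.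
      pose proof (Hpath (S (S p)) e ltac:(lia)) as Hpp. fold Y in Hpp.
      assert (f * Lp <= c + f * (D * (1 / INR (S (S p)) + 2 * e ^ 2))).
      { apply Rle_trans with (c + f * rsum (fun k => dist2 (Y k) (Y (S k))) (S (S p))); [lra|].
        apply Rplus_le_compat_l. apply Rmult_le_compat_l; [lra|exact Hpp]. }
      assert (f * (D / INR (S p)) <= f * Lp) by (apply Rmult_le_compat_l; lra).
      unfold Rdiv in *. lra. }
    replace (p + 2)%nat with (S (S p)) by lia.
    rewrite !S_INR in *. set (P := INR p) in *.
    assert (0 <= P) by apply pos_INR.
    apply (Rmult_le_reg_r c); auto. replace (f * D / c * c) with (f * D) by (field; lra).
    assert (f * D / (P + 1) - f * D / (P + 1 + 1) <= c) by lra.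
    replace (f * D / (P + 1) - f * D / (P + 1 + 1)) with (f * D / ((P + 1) * (P + 2))) in H0 by (field; lra).
    apply (Rmult_le_compat_l ((P + 1) * (P + 2))) in H0; [|nra].
    replace ((P + 1) * (P + 2) * (f * D / ((P + 1) * (P + 2)))) with (f * D) in H0 by (field; lra).
    nra.
Qed.

Lemma deg2_indeg {Z zBS} (T : FQST Z zBS) v : is_steiner T v -> degree T v = 2%nat -> indeg T v = 1%nat.
Proof.
  intros [Hs1 Hs2] Hd. unfold degree in Hd. destruct (Nat.ltb_spec v (sink T)); lia.
Qed.

Theorem mainTheorem13 (Z : list point) (zBS : point) (c : R)
  (T : FQST Z zBS) (p : nat) (x : nat -> nat) (f : R) :
  (1 <= length Z)%nat ->
  NoDup Z ->
  ~ In zBS Z ->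
  0 < c ->
  is_MFQST c T ->
  is_path T p x ->
  (forall i, (1 <= i <= p)%nat -> is_steiner T (x i) /\ degree T (x i) = 2%nat) ->
  (forall i, (i <= p)%nat -> edge_flow T (x i) (x (S i)) = f) ->
  INR p * INR (p + 1) <= f * dist2 (node_pos T (x 0%nat)) (node_pos T (x (p + 1)%nat)) / c
  <= INR (p + 2) * INR (p + 1).
Proof.
  intros Hn HZ HB Hc Hmin [P1 [P2 P3]] Hst Hfl.
  set (Fw := fun j => (x j < sink T)%nat /\ nxt T (x j) = x (S j)).
  set (Bk := fun j => (x (S j) < sink T)%nat /\ nxt T (x (S j)) = x j).
  assert (Hadj : forall j, (j <= p)%nat -> Fw j \/ Bk j) by (intros j Hj; apply P3; auto).
  assert (Hindeg : forall i, (1 <= i <= p)%nat -> indeg T (x i) = 1%nat)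
    by (intros i Hi; destruct (Hst i Hi); apply deg2_indeg; auto).
  assert (HxN : forall i, (1 <= i <= p)%nat -> (x i < sink T)%nat) by (intros i Hi; apply (Hst i Hi)).
  assert (PF : forall i, (1 <= i <= p)%nat -> Fw (i - 1)%nat -> Fw i).
  { intros i Hi [A1 A2]. destruct (Hadj i ltac:(lia)) as [|[B1 B2]]; auto. exfalso.
    replace (S (i - 1)) with i in A2 by lia.
    assert (x (i - 1)%nat = x (S i)) by (apply (indeg_unique T (x i)); auto).
    apply P2 in H; lia. }
  assert (PB : forall i, (1 <= i <= p)%nat -> Bk (i - 1)%nat -> Bk i).
  { intros i Hi [A1 A2]. destruct (Hadj i ltac:(lia)) as [[B1 B2]|]; auto. exfalso.
    replace (S (i - 1)) with i in A1, A2 by lia.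
    rewrite A2 in B2. apply P2 in B2; lia. }
  assert (AF : Fw 0%nat -> forall j, (j <= p)%nat -> Fw j).
  { intros H0 j. induction j; intros Hj; auto. apply PF; [lia|]. replace (S j - 1)%nat with j by lia. apply IHj; lia. }
  assert (AB : Bk 0%nat -> forall j, (j <= p)%nat -> Bk j).
  { intros H0 j. induction j; intros Hj; auto. apply PB; [lia|]. replace (S j - 1)%nat with j by lia. apply IHj; lia. }
  destruct (Hadj 0%nat ltac:(lia)) as [H0|H0].
  -
    apply (core T c p x f); auto.
    repeat split.
    + intros i Hi. apply P1; auto.
    + intros i j Hi Hj E. apply P2; auto.
    + apply (AF H0 i); auto.
    + apply (AF H0 i); auto.
    + intros i Hi. apply (Hst i Hi).
    + intros i Hi u Hu E. destruct (AF H0 (i - 1)%nat ltac:(lia)) as [A1 A2].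
      replace (S (i - 1)) with i in A2 by lia.
      apply (indeg_unique T (x i)); auto.
    + intros i Hi. rewrite <- (Hfl i Hi). unfold edge_flow.
      destruct (AF H0 i Hi) as [A1 A2].
      destruct (Nat.ltb_spec (x i) (sink T)); [|lia]. rewrite A2, Nat.eqb_refl. reflexivity.
  -
    set (y := fun j => x (p + 1 - j)%nat).
    assert (Hy0 : y 0%nat = x (p + 1)%nat) by (unfold y; f_equal; lia).
    assert (Hy1 : y (p + 1)%nat = x 0%nat) by (unfold y; f_equal; lia).
    rewrite dist2_sym, <- Hy0, <- Hy1.
    apply (core T c p y f); auto.
    repeat split.
    + intros i Hi. apply P1; lia.
    + intros i j Hi Hj E. unfold y in E. apply P2 in E; lia.
    + destruct (AB H0 (p - i)%nat ltac:(lia)) as [A1 A2]. unfold y.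
      replace (p + 1 - i)%nat with (S (p - i)) by lia. auto.
    + destruct (AB H0 (p - i)%nat ltac:(lia)) as [A1 A2]. unfold y.
      replace (p + 1 - i)%nat with (S (p - i)) by lia. rewrite A2. f_equal; lia.
    + intros i Hi. apply (Hst (p + 1 - i)%nat); lia.
    + intros i Hi u Hu E. unfold y in *.
      destruct (AB H0 (p + 1 - i)%nat ltac:(lia)) as [A1 A2].
      replace (p + 1 - (i - 1))%nat with (S (p + 1 - i)) by lia.
      apply (indeg_unique T (x (p + 1 - i)%nat)); auto. apply Hindeg; lia.
    + intros i Hi. unfold y. destruct (AB H0 (p - i)%nat ltac:(lia)) as [A1 A2].
      rewrite <- (Hfl (p - i)%nat) by lia. unfold edge_flow.
      replace (p + 1 - i)%nat with (S (p - i)) by lia.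
      destruct (Nat.ltb_spec (x (p - i)%nat) (sink T)); simpl; [|reflexivity].
      destruct (Nat.eqb_spec (nxt T (x (p - i)%nat)) (x (S (p - i)))); [|reflexivity].
      exfalso. apply (no_2cycle T (x (p - i)%nat) (x (S (p - i)))); auto.
Qed.
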